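(* Let $G$ be a finite graph, let $L=\{L_v\subset \mathbb{R}:v\in V(G)\}$ be an assignment of finite lists of real numbers to the vertices of $G$, and suppose that $f:V(G)\to \mathbb{Z}$ satisfies $f(v)<|L_v|$ for every $v\in V(G)$ and $\sum_{v\in V(G)} f(v)=|E(G)|-2$. If $G$ is not $L$-colorable, then for each color $c$, $$\sum_{\{u,v\}\subseteq V(G)} [x^{f+1_u+1_v}]\,P_G \cdot \chi_{L,c}(u)\chi_{L,c}(v) + \sum_{v\in V(G)} [x^{f+2\cdot 1_v}]\,P_G \cdot \chi_{L,c}(v)=0,$$ and for any distinct colors $c_1$ and $c_2$, $$\sum_{\{u,v\}\subseteq V(G)} [x^{f+1_u+1_v}]\,P_G \cdot (\chi_{L,c_1}(u)\chi_{L,c_2}(v)+\chi_{L,c_2}(u)\chi_{L,c_1}(v))+\sum_{v\in V(G)} [x^{f+2\cdot 1_v}]\,P_G \cdot \chi_{L,c_1}(v)\chi_{L,c_2}(v)=0,$$ where the sums over $\{u,v\}\subseteq V(G)$ range over unordered pairs of distinct vertices.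
   Context: An $L$-coloring of $G$ is a function $\varphi$ with $\varphi(v)\in L_v$ for all $v\in V(G)$ and $\varphi(u)\neq\varphi(v)$ for every edge $uv\in E(G)$; $G$ is $L$-colorable if an $L$-coloring exists. The graph polynomial $P_G$ is the polynomial in variables $x_v$ ($v\in V(G)$) defined by fixing an orientation $\vec G$ of $G$ and setting $P_G=\prod_{(u,v)\in E(\vec G)}(x_v-x_u)$; it is determined up to sign by $G$. For a function $g:V(G)\to\mathbb{Z}$ with nonnegative values, $x^g=\prod_{v\in V(G)}x_v^{g(v)}$, and $[x^g]\,q$ denotes the coefficient of the monomial $x^g$ in a polynomial $q$ (taken to be $0$ if $g$ has a negative value). For $z\in V(G)$, $1_z:V(G)\to\{0,1\}$ is the function with $1_z(z)=1$ and $1_z(u)=0$ for $u\neq z$. For a color $c$, the characteristic vector $\chi_{L,c}:V(G)\to\{0,1\}$ is defined by $\chi_{L,c}(v)=1$ if $c\in L_v$ and $\chi_{L,c}(v)=0$ otherwise. *)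

(* Defs.v *)
From HB Require Import structures.
From mathcomp Require Import all_boot all_order all_algebra.
From mathcomp Require Import finmap.
From mathcomp Require Import reals.
From mathcomp Require Import mpoly.
Set Implicit Arguments. Unset Strict Implicit. Unset Printing Implicit Defensive.
Import Order.TTheory GRing.Theory Num.Theory.
Local Open Scope ring_scope.

Definition simple_graph (n : nat) (e : rel 'I_n) : Prop :=
  ssrbool.symmetric e /\ ssrbool.irreflexive e.

Definition edges (n : nat) (e : rel 'I_n) : {set 'I_n * 'I_n} :=
  [set p : 'I_n * 'I_n | (p.1 < p.2)%N && e p.1 p.2].

(* Graph polynomial, for the orientation u -> v whenever u < v. *)
Definition graph_poly (n : nat) (e : rel 'I_n) : {mpoly int[n]} :=
  \prod_(p in edges e) ('X_p.2 - 'X_p.1).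

(* [x^g] q, taken to be 0 if g has a negative value. *)
Definition coef_at (n : nat) (q : {mpoly int[n]}) (g : 'I_n -> int) : int :=
  if [forall i, 0 <= g i] then q@_[multinom `|g i|%N | i < n] else 0.

Definition ind (n : nat) (z : 'I_n) : 'I_n -> int := fun u => (u == z)%:R.

Definition L_colorable (R : realType) (n : nat) (e : rel 'I_n)
    (L : 'I_n -> {fset R}) : Prop :=
  exists phi : 'I_n -> R,
    (forall v, phi v \in L v) /\ (forall u v, e u v -> phi u != phi v).

Definition chi (R : realType) (n : nat) (L : 'I_n -> {fset R}) (c : R) :
  'I_n -> int := fun v => (c \in L v)%:R.

(* Main.v *)
Require Import Defs.
From HB Require Import structures.
From mathcomp Require Import all_boot all_order all_algebra.
From mathcomp Require Import finmap.
From mathcomp Require Import reals.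
From mathcomp Require Import mpoly.
From mathcomp Require Import ring lra zify.
Import Order.TTheory GRing.Theory Num.Theory.
Local Open Scope ring_scope.
Set Implicit Arguments. Unset Strict Implicit. Unset Printing Implicit Defensive.

Section Univ.
Variable R : fieldType.
Implicit Types (B : seq R) (b c : R).

Definition wt B b := (\prod_(b' <- B | b' != b) (b - b'))^-1.
Definition lag B b : {poly R} := \prod_(b' <- B | b' != b) ('X - b'%:P).

Lemma size_lag B b : uniq B -> b \in B -> size (lag B b) = size B.
Proof.
move=> uB bB; rewrite /lag -big_filter size_prod_XsubC -rem_filter //.
by rewrite size_rem // prednK //; case: B bB {uB}.
Qed.

Lemma lag_monic B b : lag B b \is monic.
Proof. exact: monic_prod_XsubC. Qed.

Lemma lag_top B b : uniq B -> b \in B -> (lag B b)`_(size B).-1 = 1.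
Proof.
move=> uB bB; have := monicP (lag_monic B b).
by rewrite /lead_coef size_lag.
Qed.

Lemma lag_high B b j : uniq B -> b \in B -> (size B <= j)%N -> (lag B b)`_j = 0.
Proof. by move=> uB bB hj; apply/(leq_sizeP _ (size B)) => //; rewrite size_lag. Qed.

Lemma lag_eval B b c : uniq B -> c \in B ->
  (lag B b).[c] = if c == b then (wt B b)^-1 else 0.
Proof.
move=> uB cB; rewrite /lag horner_prod.
case: eqP => [->|/eqP ncb].
  by rewrite /wt invrK; apply: eq_bigr => i _; rewrite hornerXsubC.
apply/eqP; rewrite prodf_seq_eq0; apply/hasP; exists c => //.
by rewrite ncb hornerXsubC subrr eqxx.
Qed.

Lemma wt_neq0 B b : uniq B -> wt B b != 0.
Proof.
move=> uB; rewrite /wt invr_eq0 prodf_seq_neq0; apply/allP => x _.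
by apply/implyP => nxb; rewrite subr_eq0 eq_sym.
Qed.

Lemma lagrange_coef B (p : {poly R}) : uniq B -> (0 < size B)%N ->
  (size p <= size B)%N ->
  \sum_(b <- B) p.[b] * wt B b = p`_(size B).-1.
Proof.
move=> uB nB sp.
pose q := \sum_(b <- B) (p.[b] * wt B b) *: lag B b.
have qc j : q`_j = \sum_(b <- B) p.[b] * wt B b * (lag B b)`_j.
  by rewrite /q coef_sum; apply: eq_bigr => b _; rewrite coefZ.
have qev c : c \in B -> q.[c] = p.[c].
  move=> cB; rewrite /q horner_sum (bigD1_seq c) //= big1_seq ?addr0.
    rewrite hornerZ lag_eval // eqxx -mulrA mulfV ?mulr1 //.
    exact: wt_neq0.
  move=> b /andP [nbc bB]; rewrite hornerZ lag_eval // eq_sym.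
  by rewrite (negbTE nbc) mulr0.
have pq : p = q.
  apply/eqP; rewrite -subr_eq0; apply/negPn/negP => nz.
  have := max_poly_roots nz _ uB.
  have -> : all (root (p - q)) B.
    by apply/allP => c cB; rewrite /root hornerD hornerN qev // subrr.
  move=> /(_ isT); rewrite ltnNge => /negP; apply.
  apply/leq_sizeP => j hj; rewrite coefB qc big1_seq ?subr0.
    by apply/(leq_sizeP _ _ sp).
  by move=> b bB; rewrite lag_high ?mulr0.
rewrite {2}pq qc; apply: eq_big_seq => b bB.
by rewrite lag_top // mulr1.
Qed.

Definition e1 B := \sum_(b <- B) b.
Definition p2 B := \sum_(b <- B) b ^+ 2.
Definition gpoly B : {poly R} := \prod_(b <- B) ('X - b%:P).

Lemma Gcoef B : let G := 'X^2 * gpoly B in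
  [/\ forall j, ((size B).+2 < j)%N -> G`_j = 0,
      G`_(size B).+2 = 1, G`_(size B).+1 = - e1 B &
      G`_(size B) *+ 2 = e1 B ^+ 2 - p2 B].
Proof.
elim: B => [|b B [IH0 IH1 IH2 IH3]] /=.
  rewrite /gpoly /e1 /p2 !big_nil mulr1 !coefXn /=; split => //.
  - by move=> j hj; rewrite coefXn (gtn_eqF hj).
  - exact/esym/oppr0.
  - by rewrite mul0rn expr0n /= subr0.
have E : 'X^2 * gpoly (b :: B) = 'X * ('X^2 * gpoly B) - b *: ('X^2 * gpoly B).
  by rewrite /gpoly big_cons mulrCA mulrBl mul_polyC.
have C j : ('X^2 * gpoly (b :: B))`_j.+1 =
    ('X^2 * gpoly B)`_j - b * ('X^2 * gpoly B)`_j.+1.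
  by rewrite E coefB coefXM coefZ.
have e1c : e1 (b :: B) = b + e1 B by rewrite /e1 big_cons.
have p2c : p2 (b :: B) = b ^+ 2 + p2 B by rewrite /p2 big_cons.
split.
- case=> // j hj; rewrite C IH0 ?IH0 ?mulr0 ?subr0 //; exact: ltnW.
- by rewrite C IH1 IH0 // mulr0 subr0.
- by rewrite C IH2 IH1 mulr1 e1c opprD addrC.
- rewrite C mulrnBl IH3 IH2 e1c p2c; rewrite -mulr_natr; ring.
Qed.

Definition sv B k := \sum_(b <- B) b ^+ k * wt B b.

Lemma gG B j : (gpoly B)`_j = ('X^2 * gpoly B)`_j.+2.
Proof. by rewrite coefXnM /= subSS subSS subn0. Qed.

Lemma XgG B j : ('X * gpoly B)`_j = ('X^2 * gpoly B)`_j.+1.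
Proof. by rewrite coefXM coefXnM; case: j => [|j] //=; rewrite subSS subSS subn0. Qed.

Lemma g_root B b : b \in B -> (gpoly B).[b] = 0.
Proof. by move=> bB; apply/eqP; rewrite -/(root _ _) root_prod_XsubC. Qed.

Lemma sv_low B k : uniq B -> (k < size B)%N -> sv B k = (k == (size B).-1)%:R.
Proof.
move=> uB kB; have nB : (0 < size B)%N by case: (size B) kB.
have := @lagrange_coef B 'X^k uB nB; rewrite size_polyXn coefXn eq_sym => <- //.
by apply: eq_bigr => b _; rewrite hornerXn.
Qed.

Lemma sv_N B : uniq B -> (0 < size B)%N -> sv B (size B) = e1 B.
Proof.
move=> uB nB; have [G0 G1 G2 _] := Gcoef B.
pose p := 'X^(size B) - gpoly B.
have := @lagrange_coef B p uB nB.
have -> : p`_(size B).-1 = e1 B.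
  rewrite coefB coefXn gG (prednK nB) G2 opprK ltn_eqF ?add0r //.
  by rewrite prednK.
move=> <-.
- apply: eq_big_seq => b bB; by rewrite hornerD hornerN g_root // subr0 hornerXn.
- apply/leq_sizeP => j hj; rewrite coefB coefXn gG.
  case: (ltngtP j (size B)) hj => [//|hlt _|-> _]; last by rewrite ?eqxx G1 subrr.
  by rewrite ?gtn_eqF // G0 ?subr0.
Qed.

Lemma sv_N1 B : uniq B -> (0 < size B)%N ->
  sv B (size B).+1 *+ 2 = e1 B ^+ 2 + p2 B.
Proof.
move=> uB nB; have [G0 G1 G2 G3] := Gcoef B.
pose p := 'X^((size B).+1) - 'X * gpoly B - e1 B *: gpoly B.
have sz : (size p <= size B)%N.
  apply/leq_sizeP => j hj; rewrite !coefB coefZ coefXn XgG gG.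
  case: (ltngtP j (size B).+1) => [hlt|hlt|->].
  + have -> : j = size B by apply/eqP; rewrite eqn_leq hj -ltnS hlt.
    rewrite G2 G1 mulr1 /=; ring.
  + by rewrite G0 ?G0 ?mulr0 ?subrr // ltnS ltnW.
  + by rewrite G1 G0 // mulr0 subr0 subrr.
have L := @lagrange_coef B p uB nB sz.
have E : p`_(size B).-1 = e1 B ^+ 2 - ('X^2 * gpoly B)`_(size B).
  rewrite !coefB coefZ coefXn XgG gG !(prednK nB) G2.
  rewrite ltn_eqF; last by rewrite ltnS leq_pred.
  by rewrite sub0r mulrN opprK addrC expr2.
rewrite E in L.
have S : \sum_(b <- B) p.[b] * wt B b = sv B (size B).+1.
  apply: eq_big_seq => b bB.
  by rewrite !hornerD !hornerN hornerZ hornerM hornerX g_root // !mulr0 !subr0 hornerXn.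
rewrite -S L mulrnBl G3 mulr2n; ring.
Qed.
End Univ.

Section Comb.
Variable n : nat.
Implicit Types (h : 'I_n -> nat).

Lemma sum2_shape h : (\sum_v h v = 2)%N ->
  (exists w : 'I_n, forall i, h i = ((i == w) * 2)%N) \/
  (exists u v : 'I_n, (u < v)%N /\ forall i, h i = ((i == u) + (i == v))%N).
Proof.
move=> hs.
have zero_rest (A : pred 'I_n) : (\sum_(i | A i) h i = 0)%N -> forall i, A i -> h i = 0%N.
  by move=> /eqP; rewrite sum_nat_eq0 => /forallP H i Ai; apply/eqP; move: (H i); rewrite Ai.
have [w hw|] := pickP (fun w : 'I_n => 2 <= h w)%N.
  left; exists w.
  move: hs; rewrite (bigD1 w) //= => hs.
  have hw2 : h w = 2%N by apply/eqP; rewrite eqn_leq hw andbT -hs leq_addr.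
  have hr : (\sum_(i | i != w) h i = 0)%N by move: hs; rewrite hw2 => /eqP; rewrite -{2}[2%N]addn0 eqn_add2l => /eqP.
  move=> i; case: (eqVneq i w) => [->|niw]; first by rewrite hw2.
  by rewrite (zero_rest _ hr i niw).
move=> no2; right.
have le1 i : (h i <= 1)%N by move: (no2 i) => /negbT; rewrite -ltnNge ltnS.
have [u hu|] := pickP (fun u : 'I_n => 0 < h u)%N; last first.
  move=> no1; move: hs; rewrite big1 // => i _.
  by move: (no1 i) => /negbT; rewrite -leqNgt leqn0 => /eqP.
have hu1 : h u = 1%N by apply/eqP; rewrite eqn_leq le1 hu.
move: hs; rewrite (bigD1 u) //= hu1 => /eqP; rewrite -[2%N]/(1 + 1)%N eqn_add2l => /eqP hs.
have [v /andP [nvu hv]|] := pickP (fun v : 'I_n => (v != u) && (0 < h v))%N; last first.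
  move=> no1; move: hs; rewrite big1 // => i niu.
  by move: (no1 i); rewrite niu /= => /negbT; rewrite -leqNgt leqn0 => /eqP.
have hv1 : h v = 1%N by apply/eqP; rewrite eqn_leq le1 hv.
move: hs; rewrite (bigD1 v) //= hv1 => /eqP; rewrite -{2}[1%N]addn0 eqn_add2l => /eqP hr.
have sh i : h i = ((i == u) + (i == v))%N.
  case: (eqVneq i u) => [->|niu].
    have nuv : (u == v) = false by rewrite eq_sym (negbTE nvu).
    by rewrite hu1 ?eqxx nuv.
  case: (eqVneq i v) => [->|niv]; first by rewrite hv1.
  by apply: (zero_rest _ hr i); rewrite niu niv.
case: (ltngtP u v) => [luv|lvu|euv].
- by exists u, v; split.
- by exists v, u; split => // i; rewrite sh addnC.
- by move: nvu; rewrite eq_sym -val_eqE /= euv eqxx.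
Qed.

Variable R : comNzRingType.

Lemma pointwise h (s : 'I_n -> nat -> R) (x y : 'I_n -> R) :
  (\sum_v h v = 2)%N -> (forall v, s v 0%N = 1) -> (forall v, s v 1%N = x v) ->
  (forall v, s v 2%N = y v) ->
  \prod_v s v (h v) =
  \sum_(u < n) \sum_(v < n | (u < v)%N)
     ([forall i, h i == ((i == u) + (i == v))%N])%:R * (x u * x v)
  + \sum_(v < n) ([forall i, h i == ((i == v) * 2)%N])%:R * y v.
Proof.
move=> hs s0 s1 s2; case: (sum2_shape hs) => [[w hw]|[a [b [lab hab]]]].
- rewrite (bigD1 w) //= hw eqxx s2 big1 ?mulr1; last first.
    by move=> i niw; rewrite hw (negbTE niw) s0.
  rewrite big1 ?add0r; last first.
    move=> u _; rewrite big1 // => v luv.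
    case: forallP => [H|_]; last by rewrite mul0r.
    exfalso; move: (H w); rewrite hw eqxx.
    case: (eqVneq w u) => [ewu|]; case: (eqVneq w v) => [ewv|] //.
    by move: luv; rewrite -ewu -ewv ltnn.
  rewrite (bigD1 w) //= big1 ?addr0.
    suff -> : [forall i, h i == ((i == w) * 2)%N] by rewrite mul1r.
    by apply/forallP => i; rewrite hw.
  move=> v nvw; case: forallP => [H|_]; last by rewrite mul0r.
  by exfalso; move: (H w); rewrite hw eqxx [w == v]eq_sym (negbTE nvw).
- have nab : a != b by rewrite -val_eqE /= neq_ltn lab.
  rewrite (bigD1 a) //= (bigD1 b) //=; last by rewrite eq_sym.
  rewrite !hab eqxx (negbTE nab) [b == a]eq_sym (negbTE nab) eqxx /=.
  rewrite s1 s1 big1 ?mulr1; last first.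
    by move=> i /andP [nia nib]; rewrite hab (negbTE nia) (negbTE nib) s0.
  rewrite [X in _ + X]big1 ?addr0; last first.
    move=> v _; case: forallP => [H|_]; last by rewrite mul0r.
    exfalso; move: (H a) (H b); rewrite !hab !eqxx (negbTE nab) [b == a]eq_sym (negbTE nab).
    by case: (eqVneq a v); case: (eqVneq b v).
  rewrite (bigD1 a) //= [X in _ = _ + X]big1 ?addr0; last first.
    move=> u nua; rewrite big1 // => v luv.
    case: forallP => [H|_]; last by rewrite mul0r.
    exfalso; move: (H a) (H b); rewrite !hab !eqxx (negbTE nab) [b == a]eq_sym (negbTE nab).
    rewrite [a == u]eq_sym (negbTE nua) /=.
    case: (eqVneq a v) => // eav _; rewrite -eav [b == a]eq_sym (negbTE nab) addn0.
    case: (eqVneq b u) => // ebu _.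
    by move: luv lab; rewrite -eav -ebu => /ltnW; rewrite leqNgt => /negbTE ->.
  rewrite (bigD1 b) //= big1 ?addr0; last first.
    move=> v /andP [lav nvb]; case: forallP => [H|_]; last by rewrite mul0r.
    by exfalso; move: (H b); rewrite hab eqxx [b == a]eq_sym (negbTE nab) [b == v]eq_sym (negbTE nvb).
  suff -> : [forall i, h i == ((i == a) + (i == b))%N] by rewrite mul1r.
  by apply/forallP => i; rewrite hab.
Qed.
End Comb.

Section Multi.
Variable R : fieldType.
Variable n : nat.
Variable B : 'I_n -> seq R.
Variable d : 'I_n -> nat.
Variable P : {mpoly int[n]}.
Hypothesis vanish : forall a : 'I_n -> R, (forall v, a v \in B v) ->
  mmap (intr : int -> R) a P = 0.

Let N := (\max_v size (B v))%N.

Lemma sum_seq_ord (v : 'I_n) (F : R -> R) :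
  \sum_(b <- B v) F b =
  \sum_(j : 'I_N) (if (j < size (B v))%N then F (nth 0 (B v) j) else 0).
Proof.
rewrite (big_nth 0) big_mkord (@big_ord_widen _ _ _ _ N (fun j => F (nth 0 (B v) j))).
  by rewrite big_mkcond.
exact: (leq_bigmax v).
Qed.

Lemma vanish_sum :
  \sum_(m <- msupp P) (P@_m)%:~R * \prod_v sv (B v) (m v + d v) = 0.
Proof.
pose a (f : {ffun 'I_n -> 'I_N}) v := nth 0 (B v) (f v).
pose ok (f : {ffun 'I_n -> 'I_N}) := [forall v, (f v < size (B v))%N].
pose W f := \prod_v (a f v ^+ d v * wt (B v) (a f v)).
have E m : \prod_v sv (B v) (m v + d v) =
    \sum_(f : {ffun 'I_n -> 'I_N}) (if ok f then (\prod_v a f v ^+ m v) * W f else 0).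
  rewrite /sv; under eq_bigr => v _ do rewrite sum_seq_ord.
  rewrite bigA_distr_bigA; apply: eq_bigr => f _.
  case: ifP => [/forallP okf|].
    rewrite /W -big_split; apply: eq_bigr => v _.
    by rewrite okf exprD /= -mulrA.
  move/negbT; rewrite negb_forall => /existsP [v nv].
  by rewrite (bigD1 v) //= (negbTE nv) mul0r.
under eq_bigr => m _ do rewrite E mulr_sumr.
rewrite exchange_big /= big1 // => f _.
case okf: (ok f); last by rewrite big1 // => m _; rewrite mulr0.
have V := @vanish (a f) (fun v => mem_nth 0 (forallP okf v)).
rewrite /mmap /mmap1 in V.
under eq_bigr => m _ do rewrite mulrA.
by rewrite -mulr_suml V mul0r.
Qed.
End Multi.

Section Ident.
Variable R : fieldType.
Variable n : nat.
Variable e : rel 'I_n.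
Hypothesis simp : simple_graph e.

Local Notation P := (graph_poly e).

Lemma P_homog : P \is #|edges e|.-homog.
Proof.
rewrite /graph_poly -sum1_card.
apply: (big_ind2 (fun k (p : {mpoly int[n]}) => p \is k.-homog)).
- exact: dhomog1.
- by move=> ? ? ? ? h1 h2; apply: dhomogM.
- by move=> p _; rewrite rpredB // dhomogX; apply/eqP; apply: mdeg1.
Qed.

Lemma P_vanish (a : 'I_n -> R) :
  (exists u v, e u v /\ a u = a v) -> mmap (intr : int -> R) a P = 0.
Proof.
case: simp => sym irr [u [v [euv auv]]].
rewrite /graph_poly rmorph_prod; apply/eqP/prodf_eq0.
have nuv : u != v by apply: contraTneq euv => ->; rewrite irr.
have [luv|luv] := ltnP u v.
  exists (u, v); first by rewrite inE /= luv euv.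
  by rewrite rmorphB /= !mmapX !mmap1U auv subrr.
have lvu : (v < u)%N by rewrite ltn_neqAle luv andbT; rewrite eq_sym -val_eqE in nuv.
exists (v, u); first by rewrite inE /= lvu sym euv.
by rewrite rmorphB /= !mmapX !mmap1U auv subrr.
Qed.

Lemma coef_ext (Q : {mpoly int[n]}) (g : 'I_n -> int) :
  \sum_(m <- msupp Q) (Q@_m)%:~R * ([forall i, (m i)%:Z == g i])%:R
  = (coef_at Q g)%:~R :> R.
Proof.
rewrite /coef_at; case: ifP => [/forallP g0 | gneg]; last first.
  rewrite big1 ?mulr0n // => m _; case: forallP => [H|]; last by rewrite mulr0.
  exfalso; move/negbT: gneg => /negP; apply; apply/forallP => i.
  by rewrite -(eqP (H i)).
set m0 := [multinom `|g i|%N | i < n].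
have E (m : 'X_{1..n}) : [forall i, (m i)%:Z == g i] = (m == m0).
  apply/forallP/eqP => [H | ->].
  - apply/mnmP => i; rewrite mnmE; apply/eqP; rewrite -(eqP (H i)); lia.
  - by move=> i; rewrite mnmE gez0_abs.
under eq_bigr do rewrite E.
case: (boolP (m0 \in msupp Q)) => [inQ|ninQ].
  rewrite (bigD1_seq m0) ?msupp_uniq //= eqxx mulr1 big1_seq ?addr0 //.
  by move=> m /andP [nm _]; rewrite (negbTE nm) mulr0.
rewrite big1_seq; first by rewrite memN_msupp_eq0.
move=> m /andP [_ mQ]; case: eqP => [em|]; last by rewrite mulr0.
by rewrite -em mQ in ninQ.
Qed.
End Ident.

Ltac natb := repeat match goal with |- context [nat_of_bool ?b] => move: (nat_of_bool b) => ? end.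

Section Term.
Variable R : fieldType.
Variable n : nat.
Variable B : 'I_n -> seq R.
Variable f : 'I_n -> int.
Hypothesis uB : forall v, uniq (B v).
Hypothesis nB : forall v, (0 < size (B v))%N.
Hypothesis fB : forall v, f v < (size (B v))%:Z.

Definition dd v : nat := absz (Posz (size (B v)) - 1 - f v)%R.
Lemma ddE v : (dd v)%:Z = (size (B v))%:Z - 1 - f v.
Proof. have := fB v; rewrite /dd; lia. Qed.

Definition RHSm (m : 'X_{1..n}) : R :=
  \sum_(u < n) \sum_(v < n | (u < v)%N)
     ([forall i, (m i)%:Z == f i + ind u i + ind v i])%:R * (e1 (B u) * e1 (B v))
  + \sum_(v < n) ([forall i, (m i)%:Z == f i + ind v i *+ 2])%:R * sv (B v) (size (B v)).+1.

Lemma indE (u i : 'I_n) : ind u i = (i == u)%:Z.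
Proof. by rewrite /ind natz. Qed.

Lemma termE (m : 'X_{1..n}) (E : nat) : mdeg m = E -> \sum_v f v = E%:Z - 2 ->
  \prod_v sv (B v) (m v + dd v) = RHSm m.
Proof.
move=> hm hf; case: (boolP [forall i, f i <= (m i)%:Z]) => [/forallP fm|].
  pose h i := absz (Posz (m i) - f i)%R.
  have hE i : (h i)%:Z = (m i)%:Z - f i by have := fm i; rewrite /h; lia.
  have hs : (\sum_v h v = 2)%N.
    have : (\sum_v h v)%:Z = 2.
      rewrite (big_morph Posz PoszD (erefl _)).
      under eq_bigr do rewrite hE.
      have sm : \sum_i (m i)%:Z = E%:Z.
        by rewrite -hm mdegE (big_morph Posz PoszD (erefl _)).
      rewrite sumrB hf sm; ring.
    lia.
  have kE v : (m v + dd v = h v + (size (B v)).-1)%N.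
    have := hE v; have := ddE v; have := nB v; lia.
  under eq_bigr do rewrite kE.
  rewrite (@pointwise n R h (fun v k => sv (B v) (k + (size (B v)).-1))
     (fun v => e1 (B v)) (fun v => sv (B v) (size (B v)).+1)) //.
  - rewrite /RHSm; congr (_ + _).
      apply: eq_bigr => u _; apply: eq_bigr => v _; congr (_%:R * _).
      congr nat_of_bool; apply/forallP/forallP => H i; move/eqP: (H i) => Hi; apply/eqP.
        move: Hi; rewrite !indE; have := hE i; clear; natb; move: (h i) (m i) (f i); lia.
      by move: Hi; rewrite !indE; have := hE i; clear; natb; move: (h i) (m i) (f i); lia.
    apply: eq_bigr => v _; congr (_%:R * _).
    congr nat_of_bool; apply/forallP/forallP => H i; move/eqP: (H i) => Hi; apply/eqP.
      by move: Hi; rewrite !indE; have := hE i; clear; natb; move: (h i) (m i) (f i); lia.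
    by move: Hi; rewrite !indE; have := hE i; clear; natb; move: (h i) (m i) (f i); lia.
  - by move=> v; rewrite add0n sv_low ?eqxx // prednK.
  - by move=> v; rewrite add1n prednK ?sv_N.
  - by move=> v; rewrite addSn add1n prednK.
rewrite negb_forall => /existsP [w]; rewrite -ltNge => mw.
rewrite (bigD1 w) //=.
have -> : sv (B w) (m w + dd w) = 0.
  rewrite sv_low //; last by have := ddE w; lia.
  by have := ddE w; have := nB w; case: eqP => //; lia.
rewrite mul0r /RHSm big1 ?add0r.
  rewrite big1 // => v _; case: forallP => [H|]; last by rewrite mul0r.
  by move: (H w); rewrite indE => /eqP; lia.
move=> u _; rewrite big1 // => v _; case: forallP => [H|]; last by rewrite mul0r.
by move: (H w); rewrite !indE => /eqP; lia.
Qed.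
End Term.

Lemma identityA (R : fieldType) n (e : rel 'I_n) (B : 'I_n -> seq R) (f : 'I_n -> int) :
  simple_graph e -> (forall v, uniq (B v)) -> (forall v, (0 < size (B v))%N) ->
  (forall v, f v < (size (B v))%:Z) ->
  \sum_(v < n) f v = (#|edges e|)%:Z - 2 ->
  (forall a : 'I_n -> R, (forall v, a v \in B v) -> exists u v, e u v /\ a u = a v) ->
  \sum_(u < n) \sum_(v < n | (u < v)%N)
     (coef_at (graph_poly e) (fun w => f w + ind u w + ind v w))%:~R * (e1 (B u) * e1 (B v))
  + \sum_(v < n) (coef_at (graph_poly e) (fun w => f w + ind v w *+ 2))%:~R
      * sv (B v) (size (B v)).+1 = 0.
Proof.
move=> simp uB nB fB hf nocol.
have V := @vanish_sum R n B (dd B f) (graph_poly e)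
  (fun a ha => P_vanish simp (nocol a ha)).
have hom := dhomogP _ _ _ (P_homog e).
rewrite -[X in _ = X]V (eq_big_seq (fun m => ((graph_poly e)@_m)%:~R * RHSm B f m)); last first.
  by move=> m mP; rewrite (termE uB nB fB (hom m mP) hf).
rewrite /RHSm; under eq_bigr do rewrite mulrDr; rewrite big_split /=.
congr (_ + _).
  symmetry; under eq_bigr do rewrite mulr_sumr.
  rewrite [X in X = _]exchange_big; apply: eq_bigr => u _.
  under eq_bigr do rewrite mulr_sumr.
  rewrite [X in X = _]exchange_big; apply: eq_bigr => v _.
  rewrite -coef_ext mulr_suml; apply: eq_bigr => m _; exact: mulrA.
symmetry; under eq_bigr do rewrite mulr_sumr.
rewrite [X in X = _]exchange_big; apply: eq_bigr => v _.
rewrite -coef_ext mulr_suml; apply: eq_bigr => m _; exact: mulrA.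
Qed.

Section Final.
Variable R : realType.
Variable n : nat.
Variable e : rel 'I_n.
Variable L : 'I_n -> {fset R}.
Variable f : 'I_n -> int.
Hypothesis simp : simple_graph e.
Hypothesis fL : forall v, f v < (#|` L v|)%:Z.
Hypothesis hf : \sum_(v < n) f v = (#|edges e|)%:Z - 2.
Hypothesis ncol : ~ L_colorable e L.
Hypothesis Lne : forall v, (0 < #|` L v|)%N.

Definition psi (c1 c2 l m : R) (x : R) := if x == c1 then l else if x == c2 then m else x.
Definition Mb := \sum_v \sum_(x <- (L v : seq R)) `|x|.

Lemma Mb_ge v x : x \in L v -> `|x| <= Mb.
Proof.
move=> xL; rewrite /Mb (bigD1 v) //= (bigD1_seq x) ?fset_uniq //=.
rewrite -addrA lerDl; apply: addr_ge0; apply: sumr_ge0 => *.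
  exact: normr_ge0.
by apply: sumr_ge0 => *.
Qed.

Local Notation C2 u v := (coef_at (graph_poly e) (fun w => f w + ind u w + ind v w)).
Local Notation C1 v := (coef_at (graph_poly e) (fun w => f w + ind v w *+ 2)).

Lemma GI c1 c2 l m : Mb < l -> Mb < m -> (c1 != c2 -> l != m) ->
  \sum_(u < n) \sum_(v < n | (u < v)%N)
     (C2 u v)%:~R * ((\sum_(x <- (L u : seq R)) psi c1 c2 l m x)
                     * (\sum_(x <- (L v : seq R)) psi c1 c2 l m x)) *+ 2
  + \sum_(v < n) (C1 v)%:~R * ((\sum_(x <- (L v : seq R)) psi c1 c2 l m x) ^+ 2
                              + \sum_(x <- (L v : seq R)) psi c1 c2 l m x ^+ 2) = 0.
Proof.
move=> hl hm hlm.
pose B v := [seq psi c1 c2 l m x | x <- (L v : seq R)].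
have lt x v : x \in L v -> x < l /\ x < m.
  move=> xL; have hx : x <= Mb := le_trans (ler_norm x) (Mb_ge xL).
  by split; [exact: le_lt_trans hx hl | exact: le_lt_trans hx hm].
have inj v : {in (L v : seq R) &, injective (psi c1 c2 l m)}.
  move=> x y xL yL; rewrite /psi.
  have [xl xm] := lt _ _ xL; have [yl ym] := lt _ _ yL.
  case: (eqVneq x c1) => [ex1|nx1]; case: (eqVneq y c1) => [ey1|ny1].
  - by rewrite ex1 ey1.
  - case: (eqVneq y c2) => [ey2|ny2].
      move=> elm; exfalso; move: hlm; rewrite -ey2 eq_sym ny1 /= elm eqxx; by move=> /(_ isT).
    by move=> ely; move: yl; rewrite -ely ltxx.
  - case: (eqVneq x c2) => [ex2|nx2].
      move=> elm; exfalso; move: hlm; rewrite -ex2 eq_sym nx1 /= elm eqxx; by move=> /(_ isT).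
    by move=> ely; move: xl; rewrite ely ltxx.
  - case: (eqVneq x c2) => [ex2|nx2]; case: (eqVneq y c2) => [ey2|ny2].
    + by rewrite ex2 ey2.
    + by move=> ely; move: ym; rewrite -ely ltxx.
    + by move=> ely; move: xm; rewrite ely ltxx.
    + by [].
have uB v : uniq (B v) by rewrite map_inj_in_uniq // fset_uniq.
have nB v : (0 < size (B v))%N by rewrite size_map; exact: Lne.
have fB v : f v < (size (B v))%:Z by rewrite size_map; exact: fL.
have nocol a : (forall v, a v \in B v) -> exists u v, e u v /\ a u = a v.
  move=> ha; pose phi v := nth 0 (L v : seq R) (index (a v) (B v)).
  have phiE v : psi c1 c2 l m (phi v) = a v.
    rewrite /phi -(nth_map 0 (psi c1 c2 l m 0)); first by rewrite nth_index.
    by rewrite -(size_map (psi c1 c2 l m)) index_mem.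
  have phiL v : phi v \in L v.
    by rewrite /phi mem_nth // -(size_map (psi c1 c2 l m)) index_mem.
  case: (boolP [exists u, exists v, e u v && (phi u == phi v)]).
    move/existsP => [u /existsP [v /andP [euv /eqP ph]]]; exists u, v; split => //.
    by rewrite -!phiE ph.
  move=> H; exfalso; apply: ncol; exists phi; split => // u v euv.
  apply/negP => /eqP ph; move/negP: H; apply; apply/existsP; exists u; apply/existsP; exists v.
  by rewrite euv ph eqxx.
have I := identityA simp uB nB fB hf nocol.
have e1E v : e1 (B v) = \sum_(x <- (L v : seq R)) psi c1 c2 l m x by rewrite /e1 big_map.
have p2E v : p2 (B v) = \sum_(x <- (L v : seq R)) psi c1 c2 l m x ^+ 2 by rewrite /p2 big_map.
have I2 := congr1 (fun x => x *+ 2) I; rewrite /= mul0rn in I2; rewrite -[X in _ = X]I2.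
rewrite mulrnDl; congr (_ + _).
  rewrite -sumrMnl; apply: eq_bigr => u _; rewrite -sumrMnl; apply: eq_bigr => v _.
  by rewrite !e1E.
rewrite -sumrMnl; apply: eq_bigr => v _.
by rewrite -mulrnAr sv_N1 // e1E p2E.
Qed.

Lemma count1 (s : seq R) c : uniq s -> \sum_(x <- s) ((x == c)%:R : R) = (c \in s)%:R.
Proof.
move=> us; case: (boolP (c \in s)) => cs.
  rewrite (bigD1_seq c) //= eqxx big1_seq ?addr0 // => x /andP [nx _].
  by rewrite (negbTE nx).
rewrite big1_seq // => x /andP [_ xs]; case: eqP => // ex.
by move: cs; rewrite -ex xs.
Qed.

Definition rest c1 c2 (x : R) := if (x == c1) || (x == c2) then 0 else x.
Definition A c1 c2 v := \sum_(x <- (L v : seq R)) rest c1 c2 x.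
Definition A2 c1 c2 v := \sum_(x <- (L v : seq R)) rest c1 c2 x ^+ 2.
Definition chiR c v : R := (c \in L v)%:R.
Definition chi2 c1 c2 v : R := ((c2 \in L v) && (c2 != c1))%:R.

Lemma psi_split c1 c2 l m x :
  psi c1 c2 l m x = rest c1 c2 x + l * (x == c1)%:R + m * ((x == c2) && (c2 != c1))%:R
  /\ psi c1 c2 l m x ^+ 2 = rest c1 c2 x ^+ 2 + l ^+ 2 * (x == c1)%:R
                            + m ^+ 2 * ((x == c2) && (c2 != c1))%:R.
Proof.
rewrite /psi /rest; case: (x =P c1) => [E1|N1]; case: (x =P c2) => [E2|N2];
  case: (c2 =P c1) => [E3|N3] /=; try (exfalso; congruence); split; ring.
Qed.

Lemma E1_split c1 c2 l m v :
  \sum_(x <- (L v : seq R)) psi c1 c2 l m x = A c1 c2 v + l * chiR c1 v + m * chi2 c1 c2 v.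
Proof.
under eq_bigr do rewrite (proj1 (psi_split _ _ _ _ _)).
rewrite !big_split /= -!mulr_sumr count1 ?fset_uniq //; congr (_ + _ * _).
rewrite /chi2; case: (c2 != c1).
  by under eq_bigr do rewrite andbT; rewrite andbT count1 // fset_uniq.
by rewrite andbF big1 // => x _; rewrite andbF.
Qed.

Lemma P2_split c1 c2 l m v :
  \sum_(x <- (L v : seq R)) psi c1 c2 l m x ^+ 2
  = A2 c1 c2 v + l ^+ 2 * chiR c1 v + m ^+ 2 * chi2 c1 c2 v.
Proof.
under eq_bigr do rewrite (proj2 (psi_split _ _ _ _ _)).
rewrite !big_split /= -!mulr_sumr count1 ?fset_uniq //; congr (_ + _ * _).
rewrite /chi2; case: (c2 != c1).
  by under eq_bigr do rewrite andbT; rewrite andbT count1 // fset_uniq.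
by rewrite andbF big1 // => x _; rewrite andbF.
Qed.

Definition gq c1 c2 l m u v : R :=
  (C2 u v)%:~R * ((A c1 c2 u + l * chiR c1 u + m * chi2 c1 c2 u)
                 * (A c1 c2 v + l * chiR c1 v + m * chi2 c1 c2 v)) *+ 2.
Definition hq c1 c2 l m v : R :=
  (C1 v)%:~R * ((A c1 c2 v + l * chiR c1 v + m * chi2 c1 c2 v) ^+ 2
                + (A2 c1 c2 v + l ^+ 2 * chiR c1 v + m ^+ 2 * chi2 c1 c2 v)).

Lemma GI2 c1 c2 l m : Mb < l -> Mb < m -> (c1 != c2 -> l != m) ->
  \sum_(u < n) \sum_(v < n | (u < v)%N) gq c1 c2 l m u v
  + \sum_(v < n) hq c1 c2 l m v = 0.
Proof.
move=> hl hm hlm; rewrite -[X in _ = X](GI hl hm hlm); congr (_ + _).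
  apply: eq_bigr => u _; apply: eq_bigr => v _.
  by rewrite /gq !E1_split.
by apply: eq_bigr => v _; rewrite /hq E1_split P2_split.
Qed.

Lemma D2_sum (I : Type) (r : seq I) (P : pred I) (F : I -> R) (G : I -> R) (H : I -> R) :
  \sum_(i <- r | P i) F i - (\sum_(i <- r | P i) G i) *+ 2 + \sum_(i <- r | P i) H i
  = \sum_(i <- r | P i) (F i - G i *+ 2 + H i).
Proof. by rewrite -sumrMnl -sumrB -big_split. Qed.

Lemma D11_sum (I : Type) (r : seq I) (P : pred I) (F G H K : I -> R) :
  \sum_(i <- r | P i) F i - \sum_(i <- r | P i) G i - \sum_(i <- r | P i) H i
  + \sum_(i <- r | P i) K i
  = \sum_(i <- r | P i) (F i - G i - H i + K i).
Proof. by rewrite -!sumrB -big_split. Qed.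

Lemma chiR2 c v : chiR c v ^+ 2 = chiR c v.
Proof. by rewrite /chiR; case: (c \in L v); rewrite ?expr1n ?expr0n. Qed.

Lemma single c :
  \sum_(u < n) \sum_(v < n | (u < v)%N) (C2 u v)%:~R * (chiR c u * chiR c v)
  + \sum_(v < n) (C1 v)%:~R * chiR c v = 0.
Proof.
pose m0 := Mb + 1.
have G t : Mb < t -> \sum_(u < n) \sum_(v < n | (u < v)%N) gq c c t m0 u v
  + \sum_(v < n) hq c c t m0 v = 0.
  move=> ht; apply: GI2 => //; first by rewrite /m0 ltrDl.
  by rewrite eqxx.
pose x := Mb + 1.
have hx k : Mb < x + k%:R by rewrite /x -addrA ltrDl ltr_wpDr.
have := G _ (hx 2%N); have := G _ (hx 1%N); have := G _ (hx 0%N).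
rewrite addr0 => E0 E1 E2.
have : 0 = (\sum_(u < n) \sum_(v < n | (u < v)%N) gq c c (x + 2%:R) m0 u v
  + \sum_(v < n) hq c c (x + 2%:R) m0 v)
  - (\sum_(u < n) \sum_(v < n | (u < v)%N) gq c c (x + 1%:R) m0 u v
  + \sum_(v < n) hq c c (x + 1%:R) m0 v) *+ 2
  + (\sum_(u < n) \sum_(v < n | (u < v)%N) gq c c x m0 u v
  + \sum_(v < n) hq c c x m0 v).
  by rewrite E0 E1 E2 mul0rn subr0 addr0.
have -> : forall a b c d e f : R, (a + b) - (c + d) *+ 2 + (e + f)
    = (a - c *+ 2 + e) + (b - d *+ 2 + f) by move=> *; ring.
rewrite !D2_sum.
under eq_bigr do rewrite D2_sum.
move=> H.
set T := (X in X = 0).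
suff S : T *+ 4 = 0 by move/eqP: S; rewrite mulrn_eq0 /= => /eqP.
apply: (etrans _ (esym H)).
rewrite /T mulrnDl -!sumrMnl; congr (_ + _).
  apply: eq_bigr => u _; rewrite -sumrMnl; apply: eq_bigr => v _.
  rewrite /gq; ring.
apply: eq_bigr => v _; rewrite /hq.
  have -> : (C1 v)%:~R * chiR c v *+ 4 = (C1 v)%:~R * (chiR c v ^+ 2 + chiR c v) *+ 2.
    by rewrite chiR2; ring.
  ring.
Qed.
Lemma mixed c1 c2 : c1 != c2 ->
  \sum_(u < n) \sum_(v < n | (u < v)%N)
     (C2 u v)%:~R * (chiR c1 u * chiR c2 v + chiR c2 u * chiR c1 v)
  + \sum_(v < n) (C1 v)%:~R * (chiR c1 v * chiR c2 v) = 0.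
Proof.
move=> n12.
have c2E v : chi2 c1 c2 v = chiR c2 v by rewrite /chi2 eq_sym n12 andbT.
pose x := Mb + 1; pose y := Mb + 4.
have G a b : (a <= 1)%N -> (b <= 1)%N ->
  \sum_(u < n) \sum_(v < n | (u < v)%N) gq c1 c2 (x + a%:R) (y + b%:R) u v
  + \sum_(v < n) hq c1 c2 (x + a%:R) (y + b%:R) v = 0.
  move=> ha hb; have ha' : a%:R <= 1 :> R by rewrite -[1 : R]/(1%:R) ler_nat.
  have hb' : 0 <= b%:R :> R by [].
  apply: GI2; rewrite /x /y.
  - have : 0 <= a%:R :> R by []. lra.
  - lra.
  - move=> _; apply/negP => /eqP; lra.
have E11 := G 1%N 1%N isT isT; have E10 := G 1%N 0%N isT isT.
have E01 := G 0%N 1%N isT isT; have E00 := G 0%N 0%N isT isT.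
rewrite !addr0 in E10 E01 E00.
have : 0 = (\sum_(u < n) \sum_(v < n | (u < v)%N) gq c1 c2 (x + 1%:R) (y + 1%:R) u v
  + \sum_(v < n) hq c1 c2 (x + 1%:R) (y + 1%:R) v)
  - (\sum_(u < n) \sum_(v < n | (u < v)%N) gq c1 c2 (x + 1%:R) y u v
  + \sum_(v < n) hq c1 c2 (x + 1%:R) y v)
  - (\sum_(u < n) \sum_(v < n | (u < v)%N) gq c1 c2 x (y + 1%:R) u v
  + \sum_(v < n) hq c1 c2 x (y + 1%:R) v)
  + (\sum_(u < n) \sum_(v < n | (u < v)%N) gq c1 c2 x y u v
  + \sum_(v < n) hq c1 c2 x y v).
  by rewrite E11 E10 E01 E00 !subr0 addr0.
have -> : forall a b c d e f g h : R, (a + b) - (c + d) - (e + f) + (g + h)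
    = (a - c - e + g) + (b - d - f + h) by move=> *; ring.
rewrite !D11_sum.
under eq_bigr do rewrite D11_sum.
move=> H.
set T := (X in X = 0).
suff S : T *+ 2 = 0 by move/eqP: S; rewrite mulrn_eq0 /= => /eqP.
apply: (etrans _ (esym H)).
rewrite /T mulrnDl -!sumrMnl; congr (_ + _).
  apply: eq_bigr => u _; rewrite -sumrMnl; apply: eq_bigr => v _.
  rewrite /gq !c2E; ring.
apply: eq_bigr => v _; rewrite /hq !c2E; ring.
Qed.
End Final.

Lemma chiE (R : realType) n (L : 'I_n -> {fset R}) c v :
  ((chi L c v)%:~R : R) = chiR L c v.
Proof. by rewrite /chi /chiR; case: (c \in L v). Qed.

Lemma coef_neg n (P : {mpoly int[n]}) (g : 'I_n -> int) w : g w < 0 -> coef_at P g = 0.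
Proof.
move=> hw; rewrite /coef_at; case: ifP => // /forallP /(_ w).
by rewrite leNgt hw.
Qed.

Unset Implicit Arguments. Set Strict Implicit. Set Printing Implicit Defensive.

Theorem theorem17 (R : realType) (n : nat) (e : rel 'I_n)
  (L : 'I_n -> {fset R}) (f : 'I_n -> int) :
  simple_graph e ->
  (forall v, f v < (#|` L v|)%:Z) ->
  \sum_(v < n) f v = (#|edges e|)%:Z - 2 ->
  ~ L_colorable e L ->
  (forall c : R,
     \sum_(u < n) \sum_(v < n | (u < v)%N)
        coef_at (graph_poly e) (fun w => f w + ind u w + ind v w) * (chi L c u * chi L c v)
     + \sum_(v < n) coef_at (graph_poly e) (fun w => f w + ind v w *+ 2) * chi L c v = 0)
  /\
  (forall c1 c2 : R, c1 != c2 ->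
     \sum_(u < n) \sum_(v < n | (u < v)%N)
        coef_at (graph_poly e) (fun w => f w + ind u w + ind v w)
          * (chi L c1 u * chi L c2 v + chi L c2 u * chi L c1 v)
     + \sum_(v < n) coef_at (graph_poly e) (fun w => f w + ind v w *+ 2)
          * (chi L c1 v * chi L c2 v) = 0).
Proof.
move=> simp fL hf ncol.
case: (boolP [forall v, 0 < #|` L v|]%N) => [/forallP Lne|].
  split.
    move=> c; apply/eqP; rewrite -(intr_eq0 R); apply/eqP.
    rewrite rmorphD /= -[X in _ = X](single simp fL hf ncol Lne c); congr (_ + _).
      rewrite rmorph_sum; apply: eq_bigr => u _; rewrite rmorph_sum; apply: eq_bigr => v _.
      by rewrite !rmorphM /= !chiE.
    by rewrite rmorph_sum; apply: eq_bigr => v _; rewrite !rmorphM /= !chiE.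
  move=> c1 c2 n12; apply/eqP; rewrite -(intr_eq0 R); apply/eqP.
  rewrite rmorphD /= -[X in _ = X](mixed simp fL hf ncol Lne n12); congr (_ + _).
    rewrite rmorph_sum; apply: eq_bigr => u _; rewrite rmorph_sum; apply: eq_bigr => v _.
    by rewrite !rmorphM rmorphD /= !rmorphM /= !chiE.
  by rewrite rmorph_sum; apply: eq_bigr => v _; rewrite !rmorphM /= !chiE.
rewrite negb_forall => /existsP [w]; rewrite -leqNgt leqn0 => /eqP Lw.
have fw : f w < 0 by have := fL w; rewrite Lw.
have chw c : chi L c w = 0.
  rewrite /chi; case: (boolP (c \in L w)) => // cw.
  by move: (cardfs0_eq Lw) cw => ->; rewrite inE.
have T2 (F : 'I_n -> 'I_n -> int) :
  \sum_(u < n) \sum_(v < n | (u < v)%N)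
     coef_at (graph_poly e) (fun w0 => f w0 + ind u w0 + ind v w0) * F u v = 0
  -> True by [].
split.
  move=> c; rewrite !big1 ?addr0 //.
    move=> v _; case: (eqVneq v w) => [->|nvw]; first by rewrite chw mulr0.
    rewrite (coef_neg _ (w := w)) ?mul0r //.
    by rewrite /ind [w == v]eq_sym (negbTE nvw) mul0rn addr0.
  move=> u _; apply: big1 => v _.
  case: (eqVneq u w) => [->|nuw]; first by rewrite chw mul0r mulr0.
  case: (eqVneq v w) => [->|nvw]; first by rewrite chw mulr0 mulr0.
  rewrite (coef_neg _ (w := w)) ?mul0r //.
  by rewrite /ind [w == u]eq_sym (negbTE nuw) [w == v]eq_sym (negbTE nvw) !addr0.
move=> c1 c2 _; rewrite !big1 ?addr0 //.
  move=> v _; case: (eqVneq v w) => [->|nvw]; first by rewrite chw mul0r mulr0.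
  rewrite (coef_neg _ (w := w)) ?mul0r //.
  by rewrite /ind [w == v]eq_sym (negbTE nvw) mul0rn addr0.
move=> u _; apply: big1 => v _.
case: (eqVneq u w) => [->|nuw]; first by rewrite !chw !mul0r addr0 mulr0.
case: (eqVneq v w) => [->|nvw]; first by rewrite !chw !(mulr0, mul0r, addr0).
rewrite (coef_neg _ (w := w)) ?mul0r //.
by rewrite /ind [w == u]eq_sym (negbTE nuw) [w == v]eq_sym (negbTE nvw) !addr0.
Qed.
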